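(* Let $A_\star\in\mathbb{R}^{n\times n}$. For any vector $x\in\mathbb{R}^n$ and any integer $k\ge n$, $$\{A\in\mathbb{R}^{n\times n}\mid Ax=A_\star x,\ A^2x=A_\star^2x,\dots,A^kx=A_\star^kx\}=\{A\in\mathbb{R}^{n\times n}\mid Ax=A_\star x,\ A^2x=A_\star^2x,\dots,A^nx=A_\star^nx\}.$$ *)

(* Defs.v *)
From mathcomp Require Import all_boot all_algebra.
From mathcomp Require Import classical_sets reals.
Set Implicit Arguments. Unset Strict Implicit. Unset Printing Implicit Defensive.
Import GRing.Theory Num.Theory.
Local Open Scope ring_scope.
Local Open Scope classical_set_scope.

Definition moment_match_set (R : realType) (n : nat) (Astar : 'M[R]_n)
  (x : 'cV[R]_n) (k : nat) : set 'M[R]_n :=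
  [set A | forall i : nat, (1 <= i <= k)%N -> A ^+ i *m x = Astar ^+ i *m x].

(* Main.v *)
Require Import Defs.
From mathcomp Require Import all_boot all_algebra.
From mathcomp Require Import classical_sets reals.
From mathcomp Require Import zify.
Local Open Scope ring_scope.
Import GRing.Theory.

Lemma horner_mx_expand (R : comNzRingType) n' (B : 'M[R]_n'.+1) (p : {poly R}) :
  horner_mx B p = \sum_(i < size p) p`_i *: B ^+ i.
Proof.
rewrite -{1}(coefK p) poly_def rmorph_sum /=; apply: eq_bigr => i _.
by rewrite linearZ /= rmorphXn /= horner_mx_X.
Qed.

Lemma key (R : comNzRingType) n' (B M : 'M[R]_n'.+1) (x : 'cV[R]_n'.+1) e :
  \sum_(i < n'.+2) (char_poly B)`_i *: (M *m (B ^+ (i + e) *m x)) = 0.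
Proof.
have := Cayley_Hamilton B; rewrite horner_mx_expand size_char_poly => H.
have : M *m ((\sum_(i < n'.+2) (char_poly B)`_i *: B ^+ i) *m (B ^+ e *m x)) = 0.
  by rewrite H mul0mx mulmx0.
rewrite mulmx_suml mulmx_sumr => E; apply: eq_trans E; apply: eq_bigr => i _.
rewrite -scalemxAl -scalemxAr; congr (_ *: (M *m _)).
by rewrite exprD mulmxA mulmxE.
Qed.

Lemma extend (R : comNzRingType) n' (A B : 'M[R]_n'.+1) (x : 'cV[R]_n'.+1) :
  (forall i, (1 <= i <= n'.+1)%N -> A ^+ i *m x = B ^+ i *m x) ->
  forall e, A ^+ e *m x = B ^+ e *m x.
Proof.
move=> H.
have eS : forall (C : 'M[R]_n'.+1) k, C *m (C ^+ k *m x) = C ^+ k.+1 *m x.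
  by move=> C k; rewrite exprS mulmxA.
suff S : forall m e, (e <= m + n'.+1)%N -> A ^+ e *m x = B ^+ e *m x.
  by move=> e; apply: (S e); rewrite leq_addr.
elim=> [|m IH] e He.
  case: e He => [|e] He; first by rewrite !expr0.
  by apply: H.
have [Hle|Hlt] := leqP e (m + n'.+1); first exact: IH.
have -> : e = (m + n'.+1).+1 by apply/eqP; rewrite eqn_leq Hlt andbT -addSn.
have HA := key _ _ B A x m; have HB := key _ _ B B x m.
rewrite big_ord_recr /= in HA; rewrite big_ord_recr /= in HB.
have Hlead : (char_poly B)`_n'.+1 = 1.
  by have := char_poly_monic B; rewrite monicE lead_coefE size_char_poly => /eqP.
rewrite Hlead !scale1r in HA HB.
have Esum : \sum_(i < n'.+1) (char_poly B)`_(widen_ord (leqnSn n'.+1) i) *: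
      (A *m (B ^+ (widen_ord (leqnSn n'.+1) i + m) *m x)) =
    \sum_(i < n'.+1) (char_poly B)`_(widen_ord (leqnSn n'.+1) i) *:
      (B *m (B ^+ (widen_ord (leqnSn n'.+1) i + m) *m x)).
  apply: eq_bigr => i _; congr (_ *: _) => /=.
  have Hi := ltn_ord i.
  rewrite -[in LHS]IH; last lia.
  rewrite eS IH; [by rewrite eS | lia].
have E2 : A *m (B ^+ (n'.+1 + m) *m x) = B *m (B ^+ (n'.+1 + m) *m x).
    apply: (addrI (\sum_(i < n'.+1) (char_poly B)`_(widen_ord (leqnSn n'.+1) i) *:
      (A *m (B ^+ (widen_ord (leqnSn n'.+1) i + m) *m x)))).
  by rewrite HA Esum HB.
by rewrite -eS IH // addnC E2 eS.
Qed.

Theorem proposition14 (R : realType) (n : nat) (Astar : 'M[R]_n)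
  (x : 'cV[R]_n) (k : nat) :
  (n <= k)%N ->
  moment_match_set Astar x k = moment_match_set Astar x n.
Proof.
move=> Hnk; apply/seteqP; split => A /= H i /andP[Hi1 Hi2].
  by apply: H; rewrite Hi1 (leq_trans Hi2 Hnk).
case: n Astar x A Hnk H => [|n'] Astar x A Hnk H.
  by rewrite !flatmx0.
by apply: extend; move=> j Hj; apply: H.
Qed.
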